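(* If a mechanism $\varphi$ is separation monotonic, separation upper invariant, and separation lower invariant, then it is $L$-separation strategyproof for any $L\ge 2$.
   Context: Let $M$ be a finite set of alternatives. A preference order is a weak order $R$ on $M$ (strict part $P$), represented as $M_1 ~P~ \ldots ~P~ M_K$ with $(M_k)$ a partition of $M$ into indifference classes, each class strictly preferred to the next. A mechanism is a map $\varphi$ from preference orders to lotteries over $M$; $\varphi_A(R)=\sum_{a\in A}\varphi_a(R)$. A lottery $x$ first order-stochastically dominates $y$ at $R$ if $\sum_{j: j R a} x_j \ge \sum_{j: j R a} y_j$ for all $a\in M$. A separation is a pair $(R,R')$ such that for some $\kappa$, $R'$ is obtained from $R=M_1 P\ldots P M_K$ by replacing the class $M_\kappa$ with $M^1_\kappa P' M^2_\kappa$, where $M^1_\kappa\dot\cup M^2_\kappa=M_\kappa$, leaving all other classes and their order unchanged. $\varphi$ is separation responsive if for all separations $\varphi_{M^1_\kappa}(R')\ge\varphi_{M^1_\kappa}(R)$ and $\varphi_{M^2_\kappa}(R')\le\varphi_{M^2_\kappa}(R)$; separation direct if for all separations with $\varphi_{M_k}(R)\ne\varphi_{M_k}(R')$ for some $k$, both $\varphi_{M^1_\kappa}(R')\ne\varphi_{M^1_\kappa}(R)$ and $\varphi_{M^2_\kappa}(R')\ne\varphi_{M^2_\kappa}(R)$; separation monotonic if both; separation upper (resp. lower) invariant if for all separations $\varphi_{M_k}(R)=\varphi_{M_k}(R')$ for all $k<\kappa$ (resp. all $k>\kappa$). An $L$-separation ($L\ge 2$) is a pair $(R,R')$ such that for some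 $\kappa$, $R'$ is obtained from $R$ by replacing the class $M_\kappa$ with $M^1_\kappa P' \ldots P' M^L_\kappa$, where $M_\kappa=\bigcup_{l=1}^L M^l_\kappa$ is a partition into pairwise disjoint sets, all other classes and their order unchanged. $\varphi$ is $L$-separation strategyproof if for every $L$-separation $(R,R')$: $\varphi(R)$ first order-stochastically dominates $\varphi(R')$ at $R$, and $\varphi(R')$ first order-stochastically dominates $\varphi(R)$ at $R'$. *)

(* Defs.v *)
From mathcomp Require Import all_boot all_order all_algebra.
Set Implicit Arguments. Unset Strict Implicit. Unset Printing Implicit Defensive.
Import Order.TTheory GRing.Theory Num.Theory.
Local Open Scope ring_scope.

Section Defs.
Variables (F : realFieldType) (M : finType).

(* A preference order (weak order) R = M_1 P ... P M_K is represented by the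
   ordered list [:: M_1; ...; M_K] of its indifference classes: nonempty,
   pairwise disjoint, covering M. *)
Definition pref_order (s : seq {set M}) : Prop :=
  [/\ forall i, (i < size s)%N -> nth set0 s i != set0,
      forall i j, (i < j < size s)%N -> [disjoint nth set0 s i & nth set0 s j]
    & \bigcup_(A <- s) A = [set: M]].

Definition cls (s : seq {set M}) (x : M) : nat := find (fun A : {set M} => x \in A) s.

Definition weakly_prefers (s : seq {set M}) (j a : M) : bool := (cls s j <= cls s a)%N.

Definition lottery (x : {ffun M -> F}) : Prop :=
  (forall a, 0 <= x a) /\ \sum_(a : M) x a = 1.

Definition mechanism (phi : seq {set M} -> {ffun M -> F}) : Prop :=
  forall s, pref_order s -> lottery (phi s).

Definition mass (x : {ffun M -> F}) (A : {set M}) : F := \sum_(a in A) x a.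

Definition fosd (s : seq {set M}) (x y : {ffun M -> F}) : Prop :=
  forall a : M, \sum_(j | weakly_prefers s j a) y j <= \sum_(j | weakly_prefers s j a) x j.

Definition separation (R R' : seq {set M}) (k : nat) (M1 M2 : {set M}) : Prop :=
  [/\ pref_order R, pref_order R', (k < size R)%N,
      [disjoint M1 & M2] /\ M1 :|: M2 = nth set0 R k
    & R' = take k R ++ M1 :: M2 :: drop k.+1 R].

Definition Lseparation (L : nat) (R R' : seq {set M}) (k : nat) (S : seq {set M}) : Prop :=
  [/\ pref_order R, pref_order R', (k < size R)%N, size S = L
    & [/\ forall i j, (i < j < size S)%N -> [disjoint nth set0 S i & nth set0 S j],
      \bigcup_(A <- S) A = nth set0 R k
    & R' = take k R ++ S ++ drop k.+1 R]].

Variable phi : seq {set M} -> {ffun M -> F}.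

Definition separation_responsive : Prop :=
  forall R R' k M1 M2, separation R R' k M1 M2 ->
    mass (phi R) M1 <= mass (phi R') M1 /\ mass (phi R') M2 <= mass (phi R) M2.

Definition separation_direct : Prop :=
  forall R R' k M1 M2, separation R R' k M1 M2 ->
    (exists2 l, (l < size R)%N & mass (phi R) (nth set0 R l) != mass (phi R') (nth set0 R l)) ->
    mass (phi R') M1 != mass (phi R) M1 /\ mass (phi R') M2 != mass (phi R) M2.

Definition separation_monotonic : Prop :=
  separation_responsive /\ separation_direct.

Definition separation_upper_invariant : Prop :=
  forall R R' k M1 M2, separation R R' k M1 M2 ->
    forall l, (l < k)%N -> mass (phi R) (nth set0 R l) = mass (phi R') (nth set0 R l).

Definition separation_lower_invariant : Prop :=
  forall R R' k M1 M2, separation R R' k M1 M2 ->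
    forall l, (k < l < size R)%N -> mass (phi R) (nth set0 R l) = mass (phi R') (nth set0 R l).

Definition Lseparation_strategyproof (L : nat) : Prop :=
  forall R R' k S, Lseparation L R R' k S ->
    fosd R (phi R) (phi R') /\ fosd R' (phi R') (phi R).

End Defs.

(* Main.v *)
Require Import Defs.
From mathcomp Require Import all_boot all_order all_algebra.
From mathcomp Require Import lra.
Set Implicit Arguments. Unset Strict Implicit. Unset Printing Implicit Defensive.
Import Order.TTheory GRing.Theory Num.Theory.
Local Open Scope ring_scope.

Definition disj (M : finType) (A B : {set M}) := [disjoint A & B].
Definition Us (M : finType) (s : seq {set M}) := \bigcup_(A <- s) A.
Definition pref' (M : finType) (s : seq {set M}) :=
  [/\ all (fun A => A != set0) s, pairwise (@disj M) s & Us s = setT].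

Lemma prefP (M : finType) (s : seq {set M}) : pref_order s <-> pref' s.
Proof.
split.
- case=> h1 h2 h3; split => //.
  + by apply/(all_nthP set0) => i hi; apply: h1.
  + apply/(pairwiseP set0) => i j hi hj hij; apply: h2; rewrite hij. exact: hj.
- case=> /(all_nthP set0) h1 /(pairwiseP set0) h2 h3; split => //.
  move=> i j /andP[hij hj]; apply: h2 => //; exact: ltn_trans hj.
Qed.

Lemma Us_cons (M : finType) (A : {set M}) s : Us (A :: s) = A :|: Us s.
Proof. by rewrite /Us big_cons. Qed.
Lemma Us_nil (M : finType) : Us [::] = (set0 : {set M}).
Proof. by rewrite /Us big_nil. Qed.
Lemma Us_cat (M : finType) (s1 s2 : seq {set M}) : Us (s1 ++ s2) = Us s1 :|: Us s2.
Proof. by rewrite /Us big_cat. Qed.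

Lemma inUs (M : finType) (s : seq {set M}) x : (x \in Us s) = has (fun A : {set M} => x \in A) s.
Proof. elim: s => [|A s IH]; by rewrite ?Us_nil ?Us_cons ?inE //= IH. Qed.

Lemma disjUl (M : finType) (A B C : {set M}) :
  [disjoint A :|: B & C] = [disjoint A & C] && [disjoint B & C].
Proof. by rewrite -!setI_eq0 setIUl setU_eq0. Qed.

Lemma disjUsl (M : finType) (s : seq {set M}) (C : {set M}) :
  [disjoint Us s & C] = all (fun A : {set M} => [disjoint A & C]) s.
Proof.
elim: s => [|A s IH]; first by rewrite Us_nil -setI_eq0 set0I eqxx.
by rewrite Us_cons disjUl IH.
Qed.

Lemma disjUsr (M : finType) (s : seq {set M}) (C : {set M}) :
  [disjoint C & Us s] = all (fun A : {set M} => [disjoint C & A]) s.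
Proof. rewrite disjoint_sym disjUsl; apply: eq_all => A; exact: disjoint_sym. Qed.

Lemma mass0 (F : realFieldType) (M : finType) (x : {ffun M -> F}) : mass x set0 = 0.
Proof. by rewrite /mass big_set0. Qed.

Lemma massU (F : realFieldType) (M : finType) (x : {ffun M -> F}) (A B : {set M}) :
  [disjoint A & B] -> mass x (A :|: B) = mass x A + mass x B.
Proof.
move=> d; rewrite /mass -bigU //; apply: eq_bigl => a; by rewrite !inE.
Qed.

Lemma massUs (F : realFieldType) (M : finType) (x : {ffun M -> F}) (s : seq {set M}) :
  pairwise (@disj M) s -> mass x (Us s) = \sum_(C <- s) mass x C.
Proof.
elim: s => [|A s IH]; first by rewrite Us_nil mass0 big_nil.
rewrite /= => /andP[h1 h2]; rewrite Us_cons big_cons massU ?IH //.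
by rewrite disjUsr.
Qed.

Lemma merge_pref (M : finType) (A S B : seq {set M}) :
  pref' (A ++ S ++ B) -> S != [::] -> pref' (A ++ Us S :: B).
Proof.
case=> h1 h2 h3 hS; split.
- move: h1; rewrite !all_cat /= => /and3P[-> hS' ->]; rewrite andbT /=.
  clear -hS hS'; case: S hS hS' => // Y S' _ /= /andP[hY _].
  apply: contra hY => /eqP e; apply/eqP/setP => z; rewrite inE.
  apply/negbTE/negP => hz.
  have : z \in Us (Y :: S') by rewrite Us_cons inE hz.
  by rewrite e inE.
  
- move: h2; rewrite !pairwise_cat /= !allrel_catr allrel_consr.
  case/and5P=> /andP[hAS hAB] hA hSB _ hB; rewrite hAB hA hB !andbT /=.
  apply/andP; split.
  + apply/allP => C hC; rewrite /disj disjUsr; apply/allP => D hD.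
    by move/allrelP: hAS; apply.
  + apply/allP => C hC; rewrite /disj disjUsl; apply/allP => D hD.
    by move/allrelP: hSB; apply.
- by rewrite -h3 !Us_cat Us_cons.
Qed.

Lemma sep_of (M : finType) (A B : seq {set M}) X Y Z :
  pref_order (A ++ X :: B) -> pref_order (A ++ Y :: Z :: B) ->
  [disjoint Y & Z] -> Y :|: Z = X ->
  separation (A ++ X :: B) (A ++ Y :: Z :: B) (size A) Y Z.
Proof.
move=> h1 h2 d e; split => //.
- by rewrite size_cat /= addnS ltnS leq_addr.
- by split => //; rewrite nth_cat ltnn subnn.
- by rewrite take_size_cat // drop_cat ltnNge leqnSn /= subSnn /= drop0.
Qed.

Lemma sep_upper (F : realFieldType) (M : finType) (phi : seq {set M} -> {ffun M -> F})
  (A B : seq {set M}) X Y Z :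
  separation_upper_invariant phi ->
  separation (A ++ X :: B) (A ++ Y :: Z :: B) (size A) Y Z ->
  forall C, C \in A -> mass (phi (A ++ Y :: Z :: B)) C = mass (phi (A ++ X :: B)) C.
Proof.
move=> Hu hs C hC; symmetry.
have := Hu _ _ _ _ _ hs (index C A); rewrite index_mem hC nth_cat index_mem hC nth_index //.
by apply.
Qed.

Lemma sep_lower (F : realFieldType) (M : finType) (phi : seq {set M} -> {ffun M -> F})
  (A B : seq {set M}) X Y Z :
  separation_lower_invariant phi ->
  separation (A ++ X :: B) (A ++ Y :: Z :: B) (size A) Y Z ->
  forall C, C \in B -> mass (phi (A ++ Y :: Z :: B)) C = mass (phi (A ++ X :: B)) C.
Proof.
move=> Hl hs C hC; symmetry.
have := Hl _ _ _ _ _ hs (size A + (index C B).+1)%N.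
have e : (size A + (index C B).+1 < size A)%N = false by rewrite ltnNge leq_addr.
rewrite nth_cat e addKn /= nth_index // size_cat /=.
rewrite ltn_add2l !ltnS index_mem hC -{1}(addn0 (size A)) ltn_add2l.
by apply.
Qed.

Lemma Inv (F : realFieldType) (M : finType) (phi : seq {set M} -> {ffun M -> F}) :
  separation_upper_invariant phi -> separation_lower_invariant phi ->
  forall (S A B : seq {set M}) X, S != [::] ->
  pref_order (A ++ X :: B) -> pref_order (A ++ S ++ B) -> Us S = X ->
  (forall C, C \in A -> mass (phi (A ++ S ++ B)) C = mass (phi (A ++ X :: B)) C) /\
  (forall C, C \in B -> mass (phi (A ++ S ++ B)) C = mass (phi (A ++ X :: B)) C).
Proof.
move=> Hu Hl; elim => [//|Y S IH] A B X _ hR hR' hU.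
case: S IH hR' hU => [|Y' S'] IH hR' hU.
  by move: hU; rewrite Us_cons Us_nil setU0 => <-.
set S := Y' :: S' in IH hR' hU *.
have eR' : A ++ (Y :: S) ++ B = (A ++ [:: Y]) ++ S ++ B by rewrite -catA.
have hR1 : pref_order (A ++ Y :: Us S :: B).
  apply/prefP; have := merge_pref (A := A ++ [:: Y]) (S := S) (B := B).
  rewrite -!catA /= => h; apply: h => //; exact/prefP.
have dY : [disjoint Y & Us S].
  case/prefP: hR' => _ + _; rewrite pairwise_cat /= => /and5P[_ _ /andP[h1 h2] _ _].
  rewrite disjUsr /=; apply/andP; split => //; move: h2; rewrite all_cat => /andP[] //.
have hs := sep_of hR hR1 dY (etrans (esym (Us_cons Y S)) hU).
have := IH (A ++ [:: Y]) B (Us S) isT; rewrite -!catA /= => /(_ hR1 hR' erefl) [h1' h2'].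
split => C hC.
- rewrite h1' ?mem_cat ?hC //. exact: (sep_upper Hu hs).
- rewrite h2' //. exact: (sep_lower Hl hs).
Qed.

Lemma pw_take (T : Type) (r : rel T) n s : pairwise r s -> pairwise r (take n s).
Proof. by rewrite -{1}(cat_take_drop n s) pairwise_cat => /and3P[]. Qed.
Lemma pw_drop (T : Type) (r : rel T) n s : pairwise r s -> pairwise r (drop n s).
Proof. by rewrite -{1}(cat_take_drop n s) pairwise_cat => /and3P[]. Qed.

Lemma massT (F : realFieldType) (M : finType) (x : {ffun M -> F}) :
  lottery x -> mass x setT = 1.
Proof. by case=> _ <-; rewrite /mass; apply: eq_bigl => a; rewrite in_setT. Qed.

Lemma total (F : realFieldType) (M : finType) (x : {ffun M -> F}) (s : seq {set M}) :
  lottery x -> pref_order s -> \sum_(C <- s) mass x C = 1.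
Proof.
move=> hx /prefP[_ hp hU]; by rewrite -massUs // hU massT.
Qed.

Lemma takedrop (F : realFieldType) (M : finType) (x : {ffun M -> F}) (s : seq {set M}) n :
  lottery x -> pref_order s -> mass x (Us (take n s)) = 1 - mass x (Us (drop n s)).
Proof.
move=> hx hs; have := total hx hs; case/prefP: hs => _ hp _.
rewrite -[in X in X -> _](cat_take_drop n s) big_cat /= -!massUs ?(pw_take, pw_drop) // => <-.
by rewrite addrK.
Qed.

Lemma sumEq (F : realFieldType) (M : finType) (x y : {ffun M -> F}) (T : seq {set M}) :
  pairwise (@disj M) T -> (forall C, C \in T -> mass x C = mass y C) ->
  mass x (Us T) = mass y (Us T).
Proof. by move=> hp h; rewrite !massUs //; apply: eq_big_seq. Qed.

Lemma Dpres (F : realFieldType) (M : finType) (phi : seq {set M} -> {ffun M -> F}) :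
  mechanism phi -> separation_upper_invariant phi -> separation_lower_invariant phi ->
  forall (S A B : seq {set M}) X, S != [::] ->
  pref_order (A ++ X :: B) -> pref_order (A ++ S ++ B) -> Us S = X ->
  mass (phi (A ++ S ++ B)) X = mass (phi (A ++ X :: B)) X.
Proof.
move=> Hm Hu Hl S A B X hS hR hR' hU.
have [IA IB] := Inv Hu Hl hS hR hR' hU.
have t1 := total (Hm _ hR) hR. have t2 := total (Hm _ hR') hR'.
move: t1 t2; rewrite !big_cat big_cons /=.
have pS : pairwise (@disj M) S.
  by case/prefP: hR' => _ + _; rewrite !pairwise_cat => /and3P[_ _ /and3P[]].
rewrite -(massUs _ pS) hU (eq_big_seq _ IA) (eq_big_seq _ IB).
move=> t1 t2; lra.
Qed.

Lemma Cmono (F : realFieldType) (M : finType) (phi : seq {set M} -> {ffun M -> F}) :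
  mechanism phi -> separation_responsive phi ->
  separation_upper_invariant phi -> separation_lower_invariant phi ->
  forall (S A B : seq {set M}) X i,
  pref_order (A ++ X :: B) -> pref_order (A ++ S ++ B) -> Us S = X ->
  mass (phi (A ++ X :: B)) (Us (take i S)) <= mass (phi (A ++ S ++ B)) (Us (take i S)).
Proof.
move=> Hm Hr Hu Hl S A B X i hR hR' hU.
case: (posnP i) => [->|ipos]; first by rewrite take0 Us_nil !mass0.
case: S hR' hU => [|Y0 S0] hR' hU; first by rewrite Us_nil !mass0.
set S := Y0 :: S0 in hR' hU *.
have hS : S != [::] by [].
case: (leqP (size S) i) => hi.
  by rewrite take_oversize // hU (Dpres Hm Hu Hl hS hR hR' hU).
have h1 : take i S != [::] by rewrite -size_eq0 size_takel ?(ltnW hi) // -lt0n.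
have h2 : drop i S != [::] by rewrite -size_eq0 size_drop subn_eq0 -ltnNge.
have eS := esym (cat_take_drop i S).
move: eS h1 h2 hR' hU; move: (take i S) (drop i S) => S1 S2 -> h1 h2 hR' hU.
rewrite -catA in hR' *.
have hR2 : pref_order (A ++ Us S1 :: S2 ++ B).
  by apply/prefP; apply: merge_pref => //; apply/prefP.
have hR1 : pref_order (A ++ Us S1 :: Us S2 :: B).
  apply/prefP; have := merge_pref (A := A ++ [:: Us S1]) (S := S2) (B := B).
  rewrite -!catA /= => h; apply: h => //; exact/prefP.
have d : [disjoint Us S1 & Us S2].
  case/prefP: hR' => _ + _; rewrite pairwise_cat => /and3P[_ _].
  rewrite pairwise_cat => /and3P[+ _ _]; rewrite allrel_catr => /andP[hs _].
  rewrite disjUsl; apply/allP => C hC; rewrite disjUsr; apply/allP => D hD.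
  by move/allrelP: hs; apply.
have hs := sep_of hR hR1 d (etrans (esym (Us_cat S1 S2)) hU).
have [resp _] := Hr _ _ _ _ _ hs.
have E2 := Dpres Hm Hu Hl h1 hR2 hR' erefl.
have := Inv Hu Hl (S := S2) (A := A ++ [:: Us S1]) (B := B) (X := Us S2) h2.
rewrite -!catA /= => /(_ hR1 hR2 erefl) [E1 _].
rewrite E2 E1 //; last by rewrite mem_cat mem_head orbT.
Qed.

Lemma fosd_of (F : realFieldType) (M : finType) (s : seq {set M}) (x y : {ffun M -> F}) :
  pref_order s -> (forall n, mass y (Us (take n s)) <= mass x (Us (take n s))) -> fosd s x y.
Proof.
move=> hs h a.
have e : forall z : {ffun M -> F},
    \sum_(j | weakly_prefers s j a) z j = mass z (Us (take (cls s a).+1 s)).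
  move=> z; rewrite /mass; apply: eq_bigl => j; rewrite inUs has_take ?ltnS //.
  case/prefP: hs => _ _ hU.
  have : j \in Us s by rewrite hU in_setT.
  by rewrite inUs.
by rewrite !e.
Qed.

Lemma takeA (T : Type) (A S : seq T) n : (size A <= n)%N -> take n (A ++ S) = A ++ take (n - size A) S.
Proof. by move=> h; rewrite take_cat ltnNge h. Qed.
Lemma dropA (T : Type) (A S : seq T) n : (size A <= n)%N -> drop n (A ++ S) = drop (n - size A) S.
Proof. by move=> h; rewrite drop_cat ltnNge h. Qed.

Lemma eq_by_drop (F : realFieldType) (M : finType) (x y : {ffun M -> F}) (s : seq {set M}) n :
  lottery x -> lottery y -> pref_order s ->
  mass x (Us (drop n s)) = mass y (Us (drop n s)) ->
  mass x (Us (take n s)) = mass y (Us (take n s)).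
Proof. by move=> hx hy hs e; rewrite (takedrop _ hx hs) (takedrop _ hy hs) e. Qed.

Lemma main_gen (F : realFieldType) (M : finType) (phi : seq {set M} -> {ffun M -> F}) :
  mechanism phi -> separation_responsive phi ->
  separation_upper_invariant phi -> separation_lower_invariant phi ->
  forall (S A B : seq {set M}) X, S != [::] ->
  pref_order (A ++ X :: B) -> pref_order (A ++ S ++ B) -> Us S = X ->
  fosd (A ++ X :: B) (phi (A ++ X :: B)) (phi (A ++ S ++ B)) /\
  fosd (A ++ S ++ B) (phi (A ++ S ++ B)) (phi (A ++ X :: B)).
Proof.
move=> Hm Hr Hu Hl S A B X hS hR hR' hU.
have [IA IB] := Inv Hu Hl hS hR hR' hU.
have lR := Hm _ hR; have lR' := Hm _ hR'.
have pR : pairwise (@disj M) (A ++ X :: B) by case/prefP: hR.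
have pR' : pairwise (@disj M) (A ++ S ++ B) by case/prefP: hR'.
have pA : pairwise (@disj M) A by move: pR; rewrite pairwise_cat => /and3P[].
have pB : pairwise (@disj M) B by move: pR; rewrite pairwise_cat => /and3P[_ _ /andP[]].
have topA : forall n, (n <= size A)%N -> forall T,
    mass (phi (A ++ S ++ B)) (Us (take n (A ++ T))) = mass (phi (A ++ X :: B)) (Us (take n (A ++ T))).
  move=> n hn T; rewrite takel_cat //; apply: sumEq; first exact: pw_take.
  by move=> C /mem_take; apply: IA.
have botB : forall m,
    mass (phi (A ++ S ++ B)) (Us (drop m B)) = mass (phi (A ++ X :: B)) (Us (drop m B)).
  move=> m; apply: sumEq; first exact: pw_drop.
  by move=> C /mem_drop; apply: IB.
split; apply: fosd_of => // n.
- case: (leqP n (size A)) => hn; first by rewrite topA.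
  rewrite (eq_by_drop (x := phi (A ++ S ++ B)) (y := phi (A ++ X :: B)) (n := n) lR' lR hR) //.
  rewrite dropA ?(ltnW hn) //; case e: (n - size A)%N => [|m].
    by move: hn; rewrite -subn_gt0 e.
  exact: botB.
- case: (leqP n (size A)) => hn; first by rewrite topA.
  case: (leqP (n - size A) (size S)) => hn2.
  + have pT := pw_take n pR'.
    rewrite takeA ?(ltnW hn) // takel_cat // in pT *.
    move: pT; rewrite pairwise_cat => /and3P[hAT pA' pT].
    have dd : [disjoint Us A & Us (take (n - size A) S)].
      rewrite disjUsl; apply/allP => C hC; rewrite disjUsr; apply/allP => D hD.
      by move/allrelP: hAT; apply.
    rewrite Us_cat !massU //.
    rewrite (sumEq (x := phi (A ++ S ++ B)) (y := phi (A ++ X :: B)) pA IA).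
    by rewrite lerD2l (Cmono Hm Hr Hu Hl _ hR hR' hU).
  + rewrite (eq_by_drop (x := phi (A ++ X :: B)) (y := phi (A ++ S ++ B)) (n := n) lR lR' hR') //.
    rewrite dropA ?(ltnW hn) // dropA ?(ltnW hn2) //.
Qed.

Theorem lemma5 (F : realFieldType) (M : finType)
  (phi : seq {set M} -> {ffun M -> F}) :
  mechanism phi ->
  separation_monotonic phi ->
  separation_upper_invariant phi ->
  separation_lower_invariant phi ->
  forall L : nat, (2 <= L)%N -> Lseparation_strategyproof phi L.
Proof.
move=> Hm [Hr _] Hu Hl L hL R R' k S [hR hR' hk hsz [hpw hU eR']]; subst R'.
have eR : R = take k R ++ nth set0 R k :: drop k.+1 R by rewrite -drop_nth // cat_take_drop.
have hS : S != [::] by rewrite -size_eq0 hsz -lt0n (ltnW hL).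
have hR2 : pref_order (take k R ++ nth set0 R k :: drop k.+1 R) by rewrite -eR.
have := main_gen Hm Hr Hu Hl hS hR2 hR' hU.
by rewrite -eR.
Qed.
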